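(* For all $n\geq1$ and all formulas $\phi,\chi_1,\dots,\chi_n\in\mathcal{L}(\nabla,\bullet)$, $$\vdash_{\mathbf{K}^{\nabla\bullet}}\Delta\Big(\bigwedge_{k=1}^n\chi_k\to\phi\Big)\land\bigwedge_{k=1}^n\Delta\chi_k\land\bigwedge_{k=1}^n\circ(\phi\to\chi_k)\to\phi\vee\Delta\phi.$$
   Context: $\mathcal{L}(\nabla,\bullet)$: $\phi::=p\mid\neg\phi\mid\phi\land\phi\mid\nabla\phi\mid\bullet\phi$ over a nonempty set of propositional variables; $\Delta\phi:=\neg\nabla\phi$, $\circ\phi:=\neg\bullet\phi$. The Hilbert system $\mathbf{K}^{\nabla\bullet}$ has axioms: A0 all instances of propositional tautologies; A1 $\bullet\phi\to\phi$; A2 $\nabla\phi\leftrightarrow\nabla\neg\phi$; A3 $\bullet(\psi\to\phi)\land\phi\to\bullet\phi$; A4 $\nabla(\phi\land\psi)\to\nabla\phi\vee\nabla\psi$; A5 $\bullet(\phi\land\psi)\to\bullet\phi\vee\bullet\psi$; A6 $\nabla\phi\to\bullet\phi\vee\bullet\neg\phi$; A7 $\bullet(\phi\to\psi)\land\bullet(\neg\phi\to\chi)\to\nabla\phi$; and rules: R1 from $\phi$ infer $\Delta\phi$; R2 from $\phi$ infer $\circ\phi$; R3 from $\phi\leftrightarrow\psi$ infer $\Delta\phi\leftrightarrow\Delta\psi$; R4 from $\phi\leftrightarrow\psi$ infer $\circ\phi\leftrightarrow\circ\psi$; MP. *)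

(* Defs.v *)
From Stdlib Require Import List.
Import ListNotations.

Inductive form : Type :=
| Var : nat -> form
| Neg : form -> form
| And : form -> form -> form
| Nab : form -> form
| Bul : form -> form.

Definition Or (a b : form) : form := Neg (And (Neg a) (Neg b)).
Definition Imp (a b : form) : form := Neg (And a (Neg b)).
Definition Iff (a b : form) : form := And (Imp a b) (Imp b a).
Definition Del (a : form) : form := Neg (Nab a).
Definition Circ (a : form) : form := Neg (Bul a).

Fixpoint peval (v : form -> bool) (f : form) : bool :=
  match f with
  | Var _ => v f
  | Neg a => negb (peval v a)
  | And a b => andb (peval v a) (peval v b)
  | Nab _ => v f
  | Bul _ => v f
  end.

(* f is an instance of a propositional tautology *)
Definition taut (f : form) : Prop := forall v : form -> bool, peval v f = true.

Inductive prov : form -> Prop :=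
| A0 : forall f, taut f -> prov f
| A1 : forall f, prov (Imp (Bul f) f)
| A2 : forall f, prov (Iff (Nab f) (Nab (Neg f)))
| A3 : forall f g, prov (Imp (And (Bul (Imp g f)) f) (Bul f))
| A4 : forall f g, prov (Imp (Nab (And f g)) (Or (Nab f) (Nab g)))
| A5 : forall f g, prov (Imp (Bul (And f g)) (Or (Bul f) (Bul g)))
| A6 : forall f, prov (Imp (Nab f) (Or (Bul f) (Bul (Neg f))))
| A7 : forall f g h, prov (Imp (And (Bul (Imp f g)) (Bul (Imp (Neg f) h))) (Nab f))
| R1 : forall f, prov f -> prov (Del f)
| R2 : forall f, prov f -> prov (Circ f)
| R3 : forall f g, prov (Iff f g) -> prov (Iff (Del f) (Del g))
| R4 : forall f g, prov (Iff f g) -> prov (Iff (Circ f) (Circ g))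
| MP : forall f g, prov (Imp f g) -> prov f -> prov g.

Fixpoint bigAnd (x : form) (xs : list form) : form :=
  match xs with
  | [] => x
  | y :: ys => And x (bigAnd y ys)
  end.

(* Main.v *)
Require Import Defs.
From Stdlib Require Import List.
Import ListNotations.

Lemma mp_taut (a b : form) : taut (Imp a b) -> prov a -> prov b.
Proof. intros H Ha. exact (MP _ _ (A0 _ H) Ha). Qed.

Ltac tautcheck :=
  let v := fresh "v" in
  intro v; simpl;
  repeat (match goal with
          | |- context [v ?x] => destruct (v x)
          | |- context [peval v ?x] => destruct (peval v x)
          end; simpl); reflexivity.

Lemma conj_prov (a b : form) : prov a -> prov b -> prov (And a b).
Proof.
  intros Ha Hb. apply (MP _ _ (MP _ _ (A0 (Imp a (Imp b (And a b))) ltac:(tautcheck)) Ha) Hb).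
Qed.

Lemma r3t (a b : form) : taut (Iff a b) -> prov (Iff (Del a) (Del b)).
Proof. intro H. exact (R3 _ _ (A0 _ H)). Qed.

Lemma L1 (chi phi : form) :
  prov (Imp (And (Del chi) (And (Circ (Imp phi chi)) (Neg phi))) (Del (Or chi phi))).
Proof.
  pose proof (r3t (Or chi phi) (Neg (And (Neg chi) (Or chi (Neg phi)))) ltac:(tautcheck)) as e1.
  pose proof (A2 (And (Neg chi) (Or chi (Neg phi)))) as e2.
  pose proof (A4 (Neg chi) (Or chi (Neg phi))) as e3.
  pose proof (A2 chi) as e4.
  pose proof (r3t (Or chi (Neg phi)) (Imp phi chi) ltac:(tautcheck)) as e5.
  pose proof (A6 (Imp phi chi)) as e6.
  pose proof (A1 (Neg (Imp phi chi))) as e7.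
  refine (mp_taut _ _ _ (conj_prov _ _ e1 (conj_prov _ _ e2 (conj_prov _ _ e3
     (conj_prov _ _ e4 (conj_prov _ _ e5 (conj_prov _ _ e6 e7))))))).
  tautcheck.
Qed.

Lemma step (chi Y phi Ds Cs : form) :
  prov (Imp (And Ds (And Cs (Neg phi))) (Del (Or Y phi))) ->
  prov (Imp (And (And (Del chi) Ds) (And (And (Circ (Imp phi chi)) Cs) (Neg phi)))
            (Del (Or (And chi Y) phi))).
Proof.
  intros IH.
  pose proof (L1 chi phi) as h.
  pose proof (r3t (Or (And chi Y) phi) (And (Or chi phi) (Or Y phi)) ltac:(tautcheck)) as e1.
  pose proof (A4 (Or chi phi) (Or Y phi)) as e2.
  refine (mp_taut _ _ _ (conj_prov _ _ IH (conj_prov _ _ h (conj_prov _ _ e1 e2)))).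
  tautcheck.
Qed.

Lemma L2 (phi chi1 : form) (chis : list form) :
  prov (Imp (And (bigAnd (Del chi1) (map Del chis))
                 (And (bigAnd (Circ (Imp phi chi1)) (map (fun c => Circ (Imp phi c)) chis))
                      (Neg phi)))
            (Del (Or (bigAnd chi1 chis) phi))).
Proof.
  revert chi1. induction chis as [|c cs IH]; intro chi1.
  - simpl. apply L1.
  - simpl. apply step. apply IH.
Qed.

Lemma final (X phi Ds Cs : form) :
  prov (Imp (And Ds (And Cs (Neg phi))) (Del (Or X phi))) ->
  prov (Imp (And (Del (Imp X phi)) (And Ds Cs)) (Or phi (Del phi))).
Proof.
  intros H.
  pose proof (r3t phi (And (Imp X phi) (Or X phi)) ltac:(tautcheck)) as e1.
  pose proof (A4 (Imp X phi) (Or X phi)) as e2.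
  refine (mp_taut _ _ _ (conj_prov _ _ H (conj_prov _ _ e1 e2))).
  tautcheck.
Qed.

(* chi_1, ..., chi_n with n >= 1 is represented as the nonempty list chi1 :: chis. *)
Theorem proposition7 (phi chi1 : form) (chis : list form) :
  prov (Imp
          (And (Del (Imp (bigAnd chi1 chis) phi))
               (And (bigAnd (Del chi1) (map Del chis))
                    (bigAnd (Circ (Imp phi chi1)) (map (fun c => Circ (Imp phi c)) chis))))
          (Or phi (Del phi))).
Proof.
  apply final. apply L2.
Qed.
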